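(* Let $T$ be a finite rooted tree in which every inner node has at least two children, with node set $V$ and leaf set $L$. Let $S\subseteq V\setminus L$, and let $(\pi,\sigma)$ and $(\pi',\sigma')$ be two pairs of injective maps from $S$ to $L$, each identifying $S$ and having unique request. If $\pi(S)=\pi'(S)$ and $\sigma(S)=\sigma'(S)$, then $\pi=\pi'$ and $\sigma=\sigma'$.
   Context: Every node is its own ancestor and descendant. A pair $(\pi,\sigma)$ of injective maps from $S\subseteq V\setminus L$ to $L$ identifies $S$ if for each $s\in S$, $s$ is the least common ancestor of $\pi(s)$ and $\sigma(s)$. For $s\in S$, a node $x$ is $s$-requested in $(\pi,\sigma)$ if $x$ lies on the path of $T$ from $\pi(s)$ to $\sigma(s)$. The pair has unique request if every node of $T$ is $s$-requested for at most one $s\in S$. *)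

(* Defs.v *)
(* A finite rooted tree is given by a finite node type T,
   a root r and a parent map par (par r = r) from which every node reaches r. *)
From mathcomp Require Import all_boot.
Set Implicit Arguments. Unset Strict Implicit. Unset Printing Implicit Defensive.

Section Tree.
Variables (T : finType) (r : T) (par : T -> T).

(* rooted tree: root is fixed by par, every node reaches the root;
   this excludes cycles, so the graph {x, par x} (x != r) is a tree. *)
Definition is_rooted_tree : Prop :=
  par r = r /\ forall x : T, exists k : nat, iter k par x = r.

Definition anc (x y : T) : Prop := exists k : nat, iter k par y = x.

Definition children (v : T) : {set T} := [set x | (x != r) && (par x == v)].

Definition leaves : {set T} := [set v | children v == set0].

Definition full_branching : Prop :=
  forall v : T, v \notin leaves -> 1 < #|children v|.

Definition is_lca (c a b : T) : Prop :=
  anc c a /\ anc c b /\ forall t, anc t a -> anc t b -> anc t c.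

Definition on_path (x a b : T) : Prop :=
  exists c, is_lca c a b /\ anc c x /\ (anc x a \/ anc x b).

Definition identifying_pair (S : {set T}) (pi sigma : T -> T) : Prop :=
  [/\ {in S, forall s, pi s \in leaves},
      {in S, forall s, sigma s \in leaves},
      {in S &, injective pi},
      {in S &, injective sigma} &
      {in S, forall s, is_lca s (pi s) (sigma s)}].

Definition requested (pi sigma : T -> T) (s x : T) : Prop :=
  on_path x (pi s) (sigma s).

Definition unique_request (S : {set T}) (pi sigma : T -> T) : Prop :=
  forall x s t, s \in S -> t \in S ->
    requested pi sigma s x -> requested pi sigma t x -> s = t.

End Tree.

(* Main.v *)
Require Import Defs.
From mathcomp Require Import all_boot.
Set Implicit Arguments. Unset Strict Implicit.

Lemma anc_cmp (T : finType) (par : T -> T) (a b l : T) :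
  anc par a l -> anc par b l -> anc par a b \/ anc par b a.
Proof.
move=> [k Hk] [m Hm].
case: (leqP k m) => H.
- right; exists (m - k); by rewrite -Hm -Hk -iterD subnK.
- left; exists (k - m); rewrite -Hm -Hk -iterD subnK //; exact: ltnW.
Qed.

Lemma anc_refl (T : finType) (par : T -> T) (a : T) : anc par a a.
Proof. by exists 0. Qed.

Lemma key (T : finType) (r : T) (par : T -> T)
  (S : {set T}) (pi sigma pi' sigma' : T -> T) s s' :
  identifying_pair r par S pi sigma ->
  unique_request par S pi sigma ->
  identifying_pair r par S pi' sigma' ->
  unique_request par S pi' sigma' ->
  s \in S -> s' \in S -> pi s = pi' s' -> s = s'.
Proof.
move=> [_ _ _ _ L1] U1 [_ _ _ _ L2] U2 sS s'S E.
have [A1 [B1 C1]] := L1 s sS.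
have [A2 [B2 C2]] := L2 s' s'S.
have [A1' [B1' C1']] := L1 s' s'S.
have [A2' [B2' C2']] := L2 s sS.
have A2e : anc par s' (pi s) by rewrite E.
have A1e : anc par s (pi' s') by rewrite -E.
have [h|h] := anc_cmp A1 A2e.
- apply: (U1 s' s s' sS s'S).
  + exists s; split; [exact: L1 | split; [exact: h | by left]].
  + exists s'; split; [exact: L1 | split; [exact: anc_refl | by left]].
- apply: (U2 s s s' sS s'S).
  + exists s; split; [exact: L2 | split; [exact: anc_refl | by left]].
  + exists s'; split; [exact: L2 | split; [exact: h | by left]].
Qed.

Lemma key2 (T : finType) (r : T) (par : T -> T)
  (S : {set T}) (pi sigma pi' sigma' : T -> T) s s' :
  identifying_pair r par S pi sigma ->
  unique_request par S pi sigma ->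
  identifying_pair r par S pi' sigma' ->
  unique_request par S pi' sigma' ->
  s \in S -> s' \in S -> sigma s = sigma' s' -> s = s'.
Proof.
move=> [_ _ _ _ L1] U1 [_ _ _ _ L2] U2 sS s'S E.
have [A1 [B1 C1]] := L1 s sS.
have [A2 [B2 C2]] := L2 s' s'S.
have A2e : anc par s' (sigma s) by rewrite E.
have [A1' [B1' C1']] := L1 s' s'S.
have [A2' [B2' C2']] := L2 s sS.
have [h|h] := anc_cmp B1 A2e.
- apply: (U1 s' s s' sS s'S).
  + exists s; split; [exact: L1 | split; [exact: h | by right]].
  + exists s'; split; [exact: L1 | split; [exact: anc_refl | by left]].
- apply: (U2 s s s' sS s'S).
  + exists s; split; [exact: L2 | split; [exact: anc_refl | by left]].
  + exists s'; split; [exact: L2 | split; [exact: h | right; rewrite -E; exact: B1]].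
Qed.

Theorem lemma3p4 (T : finType) (r : T) (par : T -> T)
  (S : {set T}) (pi sigma pi' sigma' : T -> T) :
  is_rooted_tree r par ->
  full_branching r par ->
  S \subset ~: leaves r par ->
  identifying_pair r par S pi sigma ->
  unique_request par S pi sigma ->
  identifying_pair r par S pi' sigma' ->
  unique_request par S pi' sigma' ->
  pi @: S = pi' @: S ->
  sigma @: S = sigma' @: S ->
  {in S, pi =1 pi'} /\ {in S, sigma =1 sigma'}.
Proof.
move=> _ _ _ I1 U1 I2 U2 Ep Es; split=> s sS.
- have : pi s \in pi' @: S by rewrite -Ep; apply: imset_f.
  case/imsetP=> s' s'S E.
  by rewrite E -(key I1 U1 I2 U2 sS s'S E).
- have : sigma s \in sigma' @: S by rewrite -Es; apply: imset_f.
  case/imsetP=> s' s'S E.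
  by rewrite E -(key2 I1 U1 I2 U2 sS s'S E).
Qed.
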